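(* Let $\Omega\subset\mathbb{R}^N$ be a nonempty open set, $X=\overline{\Omega}$, $Y\subset\mathbb{R}^N$, $x_0\in\Omega$ and $u:X\to Y$. If $u$ is differentiable at $x_0$ and $r_u(x_0)=2$, then $\nabla u(x_0)\in O(N)$.
   Context: $O(N)$ is the set of orthogonal $N\times N$ matrices. $e_u(x_0)=\limsup_{x\to x_0,\,x\ne x_0}\frac{|u(x)-u(x_0)|}{|x-x_0|}$, $c_u(x_0)=\limsup_{x\to x_0,\,x\ne x_0}\frac{|x-x_0|}{|u(x)-u(x_0)|}$ (quotient $+\infty$ if $u(x)=u(x_0)$), and $r_u(x_0)=e_u(x_0)+c_u(x_0)$. *)

(* Defs.v *)
(* R^N is modelled as row vectors 'rV[R]_N. *)
From HB Require Import structures.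
From mathcomp Require Import all_boot all_order all_algebra.
From mathcomp Require Import all_classical all_reals all_analysis.
Set Implicit Arguments. Unset Strict Implicit. Unset Printing Implicit Defensive.
Import Order.TTheory GRing.Theory Num.Theory.
Import numFieldNormedType.Exports.
Local Open Scope classical_set_scope.
Local Open Scope ring_scope.

(* Euclidean norm |x| on R^N (the library norm on 'rV is the max norm). *)
Definition enorm {R : realType} {N : nat} (v : 'rV[R]_N) : R :=
  Num.sqrt (\sum_(i < N) v ord0 i ^+ 2).

(* limsup_{x -> x0, x <> x0} q x, in the extended reals:
   inf over r > 0 of sup of q on the punctured Euclidean ball of radius r. *)
Definition plimsup {R : realType} {N : nat} (q : 'rV[R]_N -> \bar R)
  (x0 : 'rV[R]_N) : \bar R :=
  ereal_inf [set ereal_sup (q @` [set x | 0 < enorm (x - x0) < r])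
            | r in [set r : R | 0 < r]].

Definition e_u {R : realType} {N : nat} (u : 'rV[R]_N -> 'rV[R]_N)
  (x0 : 'rV[R]_N) : \bar R :=
  plimsup (fun x => (enorm (u x - u x0) / enorm (x - x0))%:E) x0.

Definition c_u {R : realType} {N : nat} (u : 'rV[R]_N -> 'rV[R]_N)
  (x0 : 'rV[R]_N) : \bar R :=
  plimsup (fun x => if u x == u x0 then +oo%E
                    else (enorm (x - x0) / enorm (u x - u x0))%:E) x0.

Definition r_u {R : realType} {N : nat} (u : 'rV[R]_N -> 'rV[R]_N)
  (x0 : 'rV[R]_N) : \bar R := (e_u u x0 + c_u u x0)%E.

(* The Jacobian matrix of u at x0 is the library's 'J u x0 = lin1_mx ('d u x0)
   (row-vector convention: u (x0+h) = u x0 + h *m 'J u x0 + o(h)). *)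

Definition orthogonal_mx {R : realType} {N : nat} (A : 'M[R]_N) : Prop :=
  A *m A^T = 1%:M.

(* Main.v *)
Require Import Defs.
From HB Require Import structures.
From mathcomp Require Import all_boot all_order all_algebra.
From mathcomp Require Import all_classical all_reals all_analysis.
From mathcomp Require Import ring lra.
Import Order.TTheory GRing.Theory Num.Theory.
Import numFieldNormedType.Exports.
Local Open Scope classical_set_scope.
Local Open Scope ring_scope.

Lemma enorm_cvg (R : realType) (N : nat) (T : Type) (F : set_system T)
  (FF : Filter F) (f : T -> 'rV[R]_N) (L : 'rV[R]_N) :
  f @ F --> L -> (fun x => enorm (f x)) @ F --> enorm L.
Proof.
move=> fL; rewrite /enorm.
have hs : (fun x => \sum_(i < N) f x ord0 i ^+ 2) @ F --> \sum_(i < N) L ord0 i ^+ 2.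
  apply: (@cvg_big _ _ _ _ xpredT add_continuous) => i _.
  rewrite expr2.
  have ci : (fun x => f x ord0 i) @ F --> L ord0 i.
    exact: (@continuous_cvg _ _ _ F FF f (fun M : 'rV[R]_N => M ord0 i) L (@coord_continuous R 1 N ord0 i L) fL).
  under eq_cvg do rewrite expr2.
  exact: cvgM.
exact: (@continuous_cvg _ _ _ F FF _ Num.sqrt _ (@sqrt_continuous R _) hs).
Qed.

Lemma enormZ (R : realType) (N : nat) (c : R) (v : 'rV[R]_N) :
  enorm (c *: v) = `|c| * enorm v.
Proof.
rewrite /enorm; under eq_bigr do rewrite mxE exprMn.
by rewrite -mulr_sumr sqrtrM ?sqrtr_sqr // sqr_ge0.
Qed.

Lemma dir_cvg (R : realType) (N : nat) (u : 'rV[R]_N -> 'rV[R]_N) x0 h :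
  differentiable u x0 ->
  (fun t : R => enorm (t^-1 *: (u (t *: h + x0) - u x0))) @ 0^'+ -->
     enorm (h *m 'J u x0).
Proof.
move=> du.
have d := @diff_derivable _ _ _ u x0 h du.
rewrite -deriveEjacobian //.
apply: enorm_cvg.
have H : (fun t : R => t^-1 *: (u (t *: h + x0) - u x0)) @ 0^' --> 'D_h u x0 := d.
apply: cvg_trans H; apply: cvg_app; apply: within_subset => y /= y0.
by rewrite gt_eqF.
Qed.

Lemma plimsup_ge (R : realType) (N : nat) (q : 'rV[R]_N -> \bar R) x0 (l : R) :
  (forall r, 0 < r -> forall eps, 0 < eps ->
     exists x, (0 < enorm (x - x0) < r) /\ ((l - eps)%:E <= q x)%E) ->
  (l%:E <= plimsup q x0)%E.
Proof.
move=> H; apply: le_ereal_inf_tmp => _ [r r0 <-].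
apply/lee_addgt0Pr => eps e0.
have [x [xb qx]] := H r r0 eps e0.
have : (q x <= ereal_sup (q @` [set y | (0 < enorm (y - x0) < r)%R]))%E.
  by apply: ereal_sup_ubound; exists x.
move=> /(le_trans qx).
by move=> hh; rewrite -[l](subrK eps) EFinD; apply: leeD2r.
Qed.

Lemma enorm_ge0 (R : realType) (N : nat) (v : 'rV[R]_N) : 0 <= enorm v.
Proof. exact: sqrtr_ge0. Qed.

Lemma enorm_eq0 (R : realType) (N : nat) (v : 'rV[R]_N) : enorm v = 0 -> v = 0.
Proof.
rewrite /enorm => /eqP; rewrite sqrtr_eq0 => hs.
have hs0 : \sum_(i < N) v ord0 i ^+ 2 = 0.
  by apply/eqP; rewrite eq_le hs sumr_ge0 // => i _; rewrite sqr_ge0.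
apply/rowP => i; rewrite mxE.
have /psumr_eq0P H := hs0.
by apply/eqP; rewrite -sqrf_eq0; apply/eqP; apply: H => // j _; rewrite sqr_ge0.
Qed.

Lemma point_facts (R : realType) (N : nat) (u : 'rV[R]_N -> 'rV[R]_N) x0 h t :
  enorm h = 1 -> 0 < t ->
  enorm (t *: h + x0 - x0) = t /\
  enorm (u (t *: h + x0) - u x0) / enorm (t *: h + x0 - x0) =
    enorm (t^-1 *: (u (t *: h + x0) - u x0)).
Proof.
move=> h1 t0.
have E : enorm (t *: h + x0 - x0) = t by rewrite addrK enormZ h1 mulr1 gtr0_norm.
split => //; rewrite E enormZ gtr0_norm ?invr_gt0 // mulrC //.
Qed.

Lemma e_ge (R : realType) (N : nat) (u : 'rV[R]_N -> 'rV[R]_N) x0 h :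
  differentiable u x0 -> enorm h = 1 ->
  ((enorm (h *m 'J u x0))%:E <= e_u u x0)%E.
Proof.
move=> du h1; apply: plimsup_ge => r r0 eps e0.
have C := @dir_cvg R N u x0 h du.
set a := enorm (h *m 'J u x0) in C *.
set g := (fun t : R => _) in C.
have P : \forall t \near 0^'+, [/\ 0 < t, t < r & `|a - g t| < eps].
  near=> t; split.
  - by near: t; exact: nbhs_right_gt.
  - by near: t; exact: nbhs_right_lt.
  - by near: t; move/cvgrPdist_lt : C; apply.
have [t [t0 tr gt]] := filter_ex P.
have [E1 E2] := @point_facts R N u x0 h t h1 t0.
exists (t *: h + x0); split; first by rewrite E1 t0 tr.
rewrite E2 lee_fin; have := ler_norm (a - g t); rewrite /g; lra.
Unshelve. all: by end_near.
Qed.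

Lemma c_ge (R : realType) (N : nat) (u : 'rV[R]_N -> 'rV[R]_N) x0 h M :
  differentiable u x0 -> enorm h = 1 -> 0 < M ->
  M * enorm (h *m 'J u x0) < 1 -> (M%:E <= c_u u x0)%E.
Proof.
move=> du h1 M0 Ma; apply: plimsup_ge => r r0 eps e0.
have C := @dir_cvg R N u x0 h du.
set a := enorm (h *m 'J u x0) in C Ma *.
set g := (fun t : R => _) in C.
have d0 : 0 < M^-1 - a.
  by rewrite subr_gt0 -(ltr_pM2l M0) mulfV ?gt_eqF.
have P : \forall t \near 0^'+, [/\ 0 < t, t < r & `|a - g t| < M^-1 - a].
  near=> t; split.
  - by near: t; exact: nbhs_right_gt.
  - by near: t; exact: nbhs_right_lt.
  - by near: t; move/cvgrPdist_lt : C; apply.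
have [t [t0 tr gt]] := filter_ex P.
have [E1 E2] := @point_facts R N u x0 h t h1 t0.
exists (t *: h + x0); split; first by rewrite E1 t0 tr.
case: eqP => [_|ne]; first exact: leey.
rewrite lee_fin.
have gpos : 0 < g t.
  rewrite lt_def enorm_ge0 andbT /g; apply/eqP => /enorm_eq0 /eqP.
  by rewrite scaler_eq0 invr_eq0 gt_eqF //= subr_eq0 => /eqP.
have glt : g t < M^-1.
  have := ler_norm (g t - a); rewrite distrC; lra.
have : M < (g t)^-1.
  by rewrite -[M]invrK ltf_pV2 ?invr_gt0 // posrE invr_gt0.
rewrite -invf_div E2 -/(g t); lra.
Unshelve. all: by end_near.
Qed.

Lemma unit_iso (R : realType) (N : nat) (u : 'rV[R]_N -> 'rV[R]_N) x0 h :
  differentiable u x0 -> r_u u x0 = 2%:E -> enorm h = 1 ->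
  enorm (h *m 'J u x0) = 1.
Proof.
move=> du r2 h1.
have He := @e_ge R N u x0 h du h1.
have Hc := fun M => @c_ge R N u x0 h M du h1.
move: He Hc r2; rewrite /r_u.
set a := enorm (h *m 'J u x0).
have a0 : 0 <= a by exact: enorm_ge0.
move: (e_u u x0) (c_u u x0) => e c He Hc r2.
have c1 : (((a + 1)^-1)%:E <= c)%E.
  apply: Hc; first by rewrite invr_gt0; lra.
  by rewrite mulrC -/(a / (a + 1)) ltr_pdivrMr; lra.
case: e He r2 => [e'| |] He r2; last by rewrite leeNy_eq in He.
- case: c Hc c1 r2 => [c'| |] Hc c1 r2; [|by []|by []].
  move: r2 He => /eqP; rewrite -EFinD eqe => /eqP r2; rewrite lee_fin => He.
  have cM : forall M, 0 < M -> M * a < 1 -> M <= c'.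
    by move=> M M0 Ma; rewrite -lee_fin; apply: Hc.
  have apos : 0 < a.
    rewrite lt_def a0 andbT; apply/eqP => aE.
    have c1' : 1 <= c' by apply: cM; rewrite ?aE; lra.
    have := cM (c' + 1); rewrite aE mulr0; lra.
  have cb : a^-1 <= c'.
    rewrite leNgt; apply/negP => cl.
    have : (c' + a^-1) / 2 <= c'.
      apply: cM.
        have : 0 < a^-1 by rewrite invr_gt0.
        move: c1; rewrite lee_fin => c1.
        have : 0 < (a + 1)^-1 by rewrite invr_gt0; lra.
        lra.
      rewrite -ltr_pdivlMr //; lra.
    lra.
  have aa : a * a^-1 = 1 by rewrite mulfV ?gt_eqF.
  nra.
- by move: c1 r2 Hc; case: c.
Qed.

Lemma iso_all (R : realType) (N : nat) (A : 'M[R]_N) :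
  (forall h : 'rV[R]_N, enorm h = 1 -> enorm (h *m A) = 1) ->
  forall h : 'rV[R]_N, enorm (h *m A) = enorm h.
Proof.
move=> H h; have [->|hn0] := eqVneq h 0.
  by rewrite mul0mx.
have cpos : 0 < enorm h.
  rewrite lt_def enorm_ge0 andbT; apply/eqP => /enorm_eq0 h0.
  by rewrite h0 eqxx in hn0.
have := H ((enorm h)^-1 *: h).
rewrite enormZ -scalemxAl enormZ gtr0_norm ?invr_gt0 // mulVf ?gt_eqF // => /(_ erefl).
move/(congr1 (fun x => enorm h * x)); rewrite mulrA mulfV ?gt_eqF // mul1r mulr1.
by [].
Qed.

Lemma enorm_mx (R : realType) (N : nat) (v : 'rV[R]_N) :
  enorm v ^+ 2 = (v *m v^T) ord0 ord0.
Proof.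
rewrite /enorm sqr_sqrtr; last by apply: sumr_ge0 => i _; rewrite sqr_ge0.
rewrite mxE; apply: eq_bigr => i _; by rewrite mxE expr2.
Qed.

Lemma entry_Q (R : realType) (N : nat) (B : 'M[R]_N) i j :
  ((delta_mx 0 i : 'rV[R]_N) *m B *m (delta_mx 0 j : 'rV[R]_N)^T) ord0 ord0 = B i j.
Proof. by rewrite trmx_delta -rowE -colE !mxE. Qed.

Lemma addmxE (R : realType) m n (A B : 'M[R]_(m, n)) i j :
  (A + B) i j = A i j + B i j.
Proof. by rewrite mxE. Qed.

Lemma trD (R : realType) m n (A B : 'M[R]_(m, n)) :
  (A + B)^T = A^T + B^T.
Proof. by apply/matrixP => a b; rewrite !mxE. Qed.

Lemma orth_of_iso (R : realType) (N : nat) (A : 'M[R]_N) :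
  (forall h : 'rV[R]_N, enorm (h *m A) = enorm h) -> A *m A^T = 1%:M.
Proof.
move=> H.
pose B := A *m A^T - 1%:M.
have Q0 : forall h : 'rV[R]_N, (h *m B *m h^T) ord0 ord0 = 0.
  move=> h; rewrite /B mulmxBr mulmxBl mulmx1 mxE.
  have := congr1 (fun x => x ^+ 2) (H h); rewrite /= !enorm_mx.
  by rewrite trmx_mul !mulmxA => ->; rewrite [X in _ + X]mxE subrr.
have Bs : B^T = B by rewrite /B linearB /= trmx_mul trmxK trmx1.
have BE : B = A *m A^T - 1%:M by [].
  clearbody B.
have Bii : forall i, B i i = 0 by move=> i; rewrite -entry_Q Q0.
have Bij : forall i j, B i j = 0.
  move=> i j.
  have := Q0 (delta_mx 0 i + delta_mx 0 j).
  rewrite trD !(mulmxDl, mulmxDr) !addmxE.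
  rewrite !entry_Q !Bii.
  have -> : B j i = B i j by rewrite -[in LHS]Bs mxE.
  move=> h; have : 2 * B i j = 0 by rewrite mulr2n mulrDl mul1r; lra.
  by move/eqP; rewrite mulf_eq0 pnatr_eq0 /= => /eqP.
by apply/eqP; rewrite -subr_eq0 -BE; apply/eqP/matrixP => i j; rewrite mxE Bij.
Qed.

Theorem lemma3p7 (R : realType) (N : nat) (Omega : set 'rV[R]_N)
  (Y : set 'rV[R]_N) (x0 : 'rV[R]_N) (u : 'rV[R]_N -> 'rV[R]_N) :
  open Omega -> Omega !=set0 ->
  (forall x, closure Omega x -> Y (u x)) ->
  Omega x0 ->
  differentiable u x0 ->
  r_u u x0 = 2%:E ->
  orthogonal_mx ('J u x0).
Proof.
move=> _ _ _ _ du r2; rewrite /orthogonal_mx.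
apply: orth_of_iso; apply: iso_all => h h1.
exact: (@unit_iso R N u x0 h du r2 h1).
Qed.
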